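(* Let $k,d$ be positive integers with $d\ge k$, and let $\alpha,\beta$ be reals with $\beta>0$ and $0\le\alpha\le d\beta$. Let $e'=(e'_1,\dots,e'_k)\in\{1,2\}^k$, and for $j\in[0:k]$ let $v_2(j)=|\{\ell\le j:e'_\ell=2\}|$ and $v_1(j)=j-v_2(j)$. Define $$F^*(e')=\sum_{j=1}^k\min\Big\{\big(d-(e'_j-1)v_1(j)-(2-e'_j)v_2(j)\big)\beta,\ \alpha\Big\}.$$ If $v_1(k)\ge v_2(k)$, then $$F^*(e')\ge v_1(k)\,\alpha+v_2(k)\min\{(d-v_1(k))\beta,\ \alpha\},$$ with equality if $e'$ is sorted, i.e. if $e'_1=\dots=e'_{v_1(k)}=1$.
   Context: $[a:b]=\{a,\dots,b\}$, $[a]=\{1,\dots,a\}$. *)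

(* Defs.v *)
From mathcomp Require Import all_boot all_order all_algebra.
Set Implicit Arguments. Unset Strict Implicit. Unset Printing Implicit Defensive.
Import Order.TTheory GRing.Theory Num.Theory.
Local Open Scope ring_scope.

(* e' = (e'_1,...,e'_k) is represented by a sequence e of size k;
   e'_j (1-based) is  nth 0 e j.-1. *)

Definition v2 (e : seq nat) (j : nat) : nat := count (pred1 2%N) (take j e).
Definition v1 (e : seq nat) (j : nat) : nat := (j - v2 e j)%N.

(* F^*(e') = sum_{j=1}^k min{ (d - (e'_j-1) v1(j) - (2-e'_j) v2(j)) beta, alpha }
   (arithmetic inside done in R, so no truncated subtraction) *)
Definition Fstar (R : realFieldType) (d : nat) (alpha beta : R) (e : seq nat) : R :=
  \sum_(1 <= j < (size e).+1)
    Num.min ((d%:R - ((nth 0%N e j.-1)%:R - 1) * (v1 e j)%:R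
                   - (2 - (nth 0%N e j.-1)%:R) * (v2 e j)%:R) * beta) alpha.

(* Main.v *)
Require Import Defs.
From mathcomp Require Import all_boot all_order all_algebra.
From mathcomp Require Import zify ring lra.
Import Order.TTheory GRing.Theory Num.Theory.
Local Open Scope ring_scope.

Lemma v2S e j : (j < size e)%N -> v2 e j.+1 = (v2 e j + (nth 0%N e j == 2%N))%N.
Proof. by move=> hj; rewrite /v2 (take_nth 0%N hj) -cats1 count_cat /= addn0. Qed.

Lemma v2le e j : (v2 e j <= j)%N.
Proof.
rewrite /v2; apply: leq_trans (count_size _ _) _; rewrite size_take_min; exact: geq_minl.
Qed.

Lemma v1S e j : (j < size e)%N -> v1 e j.+1 = (v1 e j + (nth 0%N e j != 2%N))%N.
Proof.
move=> hj; rewrite /v1 v2S //; have := v2le e j.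
case: (nth 0%N e j == 2%N) => /=; lia.
Qed.

Lemma vmono e j n : (j <= n)%N -> (n <= size e)%N ->
  (v1 e j <= v1 e n)%N /\ (v2 e j <= v2 e n)%N.
Proof.
elim: n => [|n IH] hjn hn.
- by move: hjn; rewrite leqn0 => /eqP ->.
- move: hjn; rewrite leq_eqVlt => /orP [/eqP -> | hlt]; first by [].
  have [h1 h2] := IH hlt (ltnW hn).
  rewrite v1S // v2S //.
  case: (nth 0%N e n == 2%N) => /=; split; lia.
Qed.

Definition G e j := if nth 0%N e j.-1 == 2%N then v1 e j else v2 e j.

Lemma sumG e n : (n <= size e)%N -> all (fun x => (x == 1)%N || (x == 2)%N) e ->
  (\sum_(1 <= j < n.+1) G e j)%N = (v1 e n * v2 e n)%N.
Proof.
move=> + hall; elim: n => [|n IH] hn.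
- by rewrite big_geq // /v1 /v2 take0.
- rewrite big_nat_recr //= IH ?(ltnW hn) // /G /= v1S // v2S //.
  have : (nth 0%N e n == 1%N) || (nth 0%N e n == 2%N).
    by apply: (allP hall); apply: mem_nth.
  case/orP => /eqP -> /=; lia.
Qed.

Lemma pw (R : realFieldType) (A D g alpha beta : R) : 0 <= g -> g <= A -> 0 < beta ->
  0 <= alpha -> alpha <= D * beta ->
  g * Num.min ((D - A) * beta) alpha + (A - g) * alpha <= A * Num.min ((D - g) * beta) alpha.
Proof.
move=> g0 gA b0 a0 aD.
case: (leP ((D - g) * beta) alpha) => h1; case: (leP ((D - A) * beta) alpha) => h2.
- have : 0 <= (A - g) * (D * beta - alpha) by apply: mulr_ge0; lra.
  nra.
- have : 0 <= (A - g) * beta by apply: mulr_ge0; lra.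
  nra.
- have : 0 <= g * (alpha - (D - A) * beta) by apply: mulr_ge0; lra.
  nra.
- nra.
Qed.

Theorem lemma2 (R : realFieldType) (k d : nat) (alpha beta : R) (e : seq nat) :
  (0 < k)%N -> (k <= d)%N ->
  0 < beta -> 0 <= alpha -> alpha <= d%:R * beta ->
  size e = k -> all (fun x => (x == 1)%N || (x == 2)%N) e ->
  (v2 e k <= v1 e k)%N ->
  (v1 e k)%:R * alpha + (v2 e k)%:R * Num.min ((d%:R - (v1 e k)%:R) * beta) alpha
    <= Fstar d alpha beta e
  /\ ((forall i : nat, (i < v1 e k)%N -> nth 0%N e i = 1%N) ->
      Fstar d alpha beta e
        = (v1 e k)%:R * alpha + (v2 e k)%:R * Num.min ((d%:R - (v1 e k)%:R) * beta) alpha).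
Proof.
move=> k0 kd b0 a0 ad sz hall hba.
have hk : k = (v1 e k + v2 e k)%N by rewrite /v1; have := v2le e k; lia.
have hF : Fstar d alpha beta e =
    \sum_(1 <= j < k.+1) Num.min ((d%:R - (G e j)%:R) * beta) alpha.
  rewrite /Fstar sz; apply: eq_big_nat => j /andP [j1 jk].
  have : (nth 0%N e j.-1 == 1%N) || (nth 0%N e j.-1 == 2%N).
    by apply: (allP hall); apply: mem_nth; rewrite sz; lia.
  rewrite /G; case/orP => /eqP -> /=; congr (Num.min (_ * _) _); ring.
split.
- have G_le : forall j, (1 <= j < k.+1)%N -> (G e j <= v1 e k)%N.
    move=> j /andP[j1 jk]; rewrite /G.
    have [h1 h2] := vmono e j k jk (eq_leq (esym sz)).
    case: ifP => _; lia.
  have H1 : \sum_(1 <= j < k.+1) ((G e j)%:R * Num.min ((d%:R - (v1 e k)%:R) * beta) alpha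
             + ((v1 e k)%:R - (G e j)%:R) * alpha)
         <= \sum_(1 <= j < k.+1) (v1 e k)%:R * Num.min ((d%:R - (G e j)%:R) * beta) alpha.
    apply: ler_sum_nat => j hj; apply: pw => //.
    by rewrite ler_nat; apply: G_le.
  have H2 : \sum_(1 <= j < k.+1) ((G e j)%:R * Num.min ((d%:R - (v1 e k)%:R) * beta) alpha
             + ((v1 e k)%:R - (G e j)%:R) * alpha)
      = (v1 e k)%:R * ((v1 e k)%:R * alpha
          + (v2 e k)%:R * Num.min ((d%:R - (v1 e k)%:R) * beta) alpha).
    rewrite big_split /= -mulr_suml -mulr_suml sumrB sumr_const_nat -natr_sum.
    rewrite sumG ?sz //.
    have -> : (k.+1 - 1)%N = (v1 e k + v2 e k)%N by lia.
    rewrite -mulr_natr natrM; ring.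
  have apos : (0 < v1 e k)%N by lia.
  rewrite -(ler_pM2l (ltr0Sn R (v1 e k).-1)) prednK // -H2 hF mulr_sumr; exact: H1.
- move=> Hs.
  have v1j : forall j, (j <= v1 e k)%N -> v1 e j = j.
    elim=> [|j IH] hj; first by rewrite /v1 /v2 take0.
    have jk : (j < size e)%N.
      by rewrite sz; apply: leq_trans hj _; rewrite /v1 leq_subr.
    by rewrite v1S // IH ?(ltnW hj) // Hs // addn1.
  have n2 : forall i, (v1 e k <= i < k)%N -> nth 0%N e i = 2%N.
    move=> i /andP[ai ik].
    have : (nth 0%N e i == 1%N) || (nth 0%N e i == 2%N).
      by apply: (allP hall); apply: mem_nth; rewrite sz.
    case/orP => /eqP h //; exfalso.
    have [m1 _] := vmono e _ _ ai (ltnW (leq_trans ik (eq_leq (esym sz)))).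
    have [m2 _] := vmono e _ _ ik (eq_leq (esym sz)).
    have := v1S e i (leq_trans ik (eq_leq (esym sz))); rewrite h /=.
    have := v1j _ (leqnn _). lia.
  have ak : (v1 e k <= k)%N by rewrite /v1 leq_subr.
  rewrite hF (@big_cat_nat _ _ _ (v1 e k).+1) //=.
  have -> : \sum_(1 <= j < (v1 e k).+1) Num.min ((d%:R - (G e j)%:R) * beta) alpha
          = \sum_(1 <= j < (v1 e k).+1) alpha.
    apply: eq_big_nat => j /andP[j1 jk].
    have hj := v1j _ jk; have := v2le e j; move: hj; rewrite /v1 => hj hl.
    have -> : G e j = 0%N.
      rewrite /G Hs /=; [lia | lia].
    by rewrite subr0 min_r.
  have -> : \sum_((v1 e k).+1 <= j < k.+1) Num.min ((d%:R - (G e j)%:R) * beta) alpha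
          = \sum_((v1 e k).+1 <= j < k.+1) Num.min ((d%:R - (v1 e k)%:R) * beta) alpha.
    apply: eq_big_nat => j /andP[j1 jk].
    have -> : G e j = v1 e k; last by [].
    rewrite /G n2 /=; last by lia.
    have [m1 _] := vmono e _ _ (ltnW j1) (@leq_trans k j _ jk (eq_leq (esym sz))).
    have [m2 _] := vmono e j k jk (eq_leq (esym sz)).
    have := v1j _ (leqnn _). lia.
  rewrite !sumr_const_nat !mulr_natl.
  have -> : ((v1 e k).+1 - 1)%N = v1 e k by lia.
  have -> : (k.+1 - (v1 e k).+1)%N = v2 e k by lia.
  by [].
Qed.
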